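(* For every $F_{\mathrm{total}}\ge0$, the optimal value of problem (P4) is at least $T^{\lim}=\max\left\{\frac{\sum_{u=1}^U D_u/r_u}{B_{\mathrm{total}}},\ \frac{\sum_{u=1}^U\zeta_uD_u}{R^S_{\mathrm{total}}}\right\}$. Consequently, for any threshold $T^{\mathrm{th}}<T^{\lim}$ there is no choice of $F_{\mathrm{total}}\ge0$ for which problem (P4) has a feasible point with $T\le T^{\mathrm{th}}$; and if $T^{\mathrm{th}}\ge T^{\lim}$, then choosing $F_{\mathrm{total}}=F^{\lim}_{\mathrm{total}}:=\left(\sum_{u=1}^U\rho_uD_u\right)\min\left\{\frac{B_{\mathrm{total}}}{\sum_{u} D_u/r_u},\frac{R^S_{\mathrm{total}}}{\sum_{u}\zeta_uD_u}\right\}$ yields optimal value $T^{\lim}\le T^{\mathrm{th}}$, and every $F_{\mathrm{total}}\ge F^{\lim}_{\mathrm{total}}$ yields exactly the optimal value $T^{\lim}$.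
   Context: Users $u=1,\dots,U$ have constants $D_u>0$, $r_u>0$, $\rho_u>0$, $\zeta_u\in(0,1)$; $B_{\mathrm{total}}>0$, $R^S_{\mathrm{total}}>0$, $F_{\mathrm{total}}\ge0$. Problem (P4): minimize $T$ over $T\ge0$, $B_u\ge0$, $R_u^S\ge0$ ($u=1,\dots,U$) subject to $T\ge\frac{D_u}{B_ur_u}$ for all $u$ (infeasible if $B_u=0$), $\sum_uB_u\le B_{\mathrm{total}}$, $\sum_uR_u^S\le R^S_{\mathrm{total}}$, $\sum_u\rho_u\frac{B_ur_u-R_u^S}{1-\zeta_u}\le F_{\mathrm{total}}$, and $R_u^S\le B_ur_u\le\frac{R_u^S}{\zeta_u}$ for all $u$. *)

(* Defs.v *)
From HB Require Import structures.
From mathcomp Require Import all_boot all_order all_algebra.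
Set Implicit Arguments. Unset Strict Implicit. Unset Printing Implicit Defensive.
Import Order.TTheory GRing.Theory Num.Theory.
Local Open Scope ring_scope.

Section P4.
Variables (R : realFieldType) (U : nat).
Variables (D r rho zeta : 'I_U -> R) (Btot RStot Ftot : R).

(* (T, B, RS) is a feasible point of problem (P4) with fronthaul budget Ftot.
   The constraint T >= D_u/(B_u r_u) is infeasible when B_u = 0, hence 0 < B u. *)
Definition feasibleP4 (T : R) (B RS : 'I_U -> R) : Prop :=
  [/\ [/\ 0 <= T, (forall u, 0 <= B u) & (forall u, 0 <= RS u)],
      (forall u, 0 < B u /\ D u / (B u * r u) <= T),
      (\sum_(u < U) B u <= Btot) /\ (\sum_(u < U) RS u <= RStot),
      \sum_(u < U) rho u * (B u * r u - RS u) / (1 - zeta u) <= Ftot &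
      (forall u, RS u <= B u * r u /\ B u * r u <= RS u / zeta u)].

Definition optimal_valueP4 (v : R) : Prop :=
  (exists B RS, feasibleP4 v B RS) /\
  (forall T B RS, feasibleP4 T B RS -> v <= T).
End P4.

Definition Tlim (R : realFieldType) (U : nat) (D r zeta : 'I_U -> R)
  (Btot RStot : R) : R :=
  Num.max ((\sum_(u < U) D u / r u) / Btot) ((\sum_(u < U) zeta u * D u) / RStot).

Definition Flim (R : realFieldType) (U : nat) (D r rho zeta : 'I_U -> R)
  (Btot RStot : R) : R :=
  (\sum_(u < U) rho u * D u) *
  Num.min (Btot / (\sum_(u < U) D u / r u)) (RStot / (\sum_(u < U) zeta u * D u)).

(* Main.v *)
Require Import Defs.
From HB Require Import structures.
From mathcomp Require Import all_boot all_order all_algebra.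
From mathcomp Require Import ring lra.
Import Order.TTheory GRing.Theory Num.Theory.
Local Open Scope ring_scope.

Lemma psum_gt0 (R : realFieldType) (U : nat) (hU : (0 < U)%N) (F : 'I_U -> R) :
  (forall u, 0 < F u) -> 0 < \sum_(u < U) F u.
Proof.
move=> hF; rewrite (bigD1 (Ordinal hU)) //=.
have := hF (Ordinal hU).
have : 0 <= \sum_(i < U | i != Ordinal hU) F i by apply: sumr_ge0 => i _; exact: ltW.
lra.
Qed.

Lemma lower_bound (R : realFieldType) (U : nat)
  (D r rho zeta : 'I_U -> R) (Btot RStot Ftot : R)
  (hD : forall u, 0 < D u) (hr : forall u, 0 < r u)
  (hzeta : forall u, 0 < zeta u /\ zeta u < 1)
  (hB : 0 < Btot) (hRS : 0 < RStot) T B RS :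
  feasibleP4 D r rho zeta Btot RStot Ftot T B RS ->
  Tlim D r zeta Btot RStot <= T.
Proof.
case=> [[hT hB0 hRS0]] hBu [hsB hsRS] _ hcon.
have h1 : forall u, D u <= T * (B u * r u).
  move=> u; have [hb hd] := hBu u.
  by rewrite -ler_pdivrMr ?mulr_gt0.
rewrite /Tlim ge_max; apply/andP; split.
- rewrite ler_pdivrMr //.
  apply: (le_trans (y := T * \sum_(u < U) B u)); last by apply: ler_wpM2l.
  rewrite mulr_sumr; apply: ler_sum => u _.
  by rewrite ler_pdivrMr // -mulrA; exact: h1.
- rewrite ler_pdivrMr //.
  apply: (le_trans (y := T * \sum_(u < U) RS u)); last by apply: ler_wpM2l.
  rewrite mulr_sumr; apply: ler_sum => u _.
  have [hz _] := hzeta u.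
  have [_ h2] := hcon u.
  have h3 : B u * r u * zeta u <= RS u by rewrite -ler_pdivlMr.
  apply: (le_trans (y := zeta u * (T * (B u * r u)))).
    by apply: ler_wpM2l; [exact: ltW | exact: h1].
  rewrite mulrA (mulrC (zeta u)) -mulrA; apply: ler_wpM2l => //; by rewrite mulrC.
Qed.

Lemma attain (R : realFieldType) (U : nat) (hU : (0 < U)%N)
  (D r rho zeta : 'I_U -> R) (Btot RStot Ftot : R)
  (hD : forall u, 0 < D u) (hr : forall u, 0 < r u) (hrho : forall u, 0 < rho u)
  (hzeta : forall u, 0 < zeta u /\ zeta u < 1)
  (hB : 0 < Btot) (hRS : 0 < RStot) :
  Flim D r rho zeta Btot RStot <= Ftot ->
  optimal_valueP4 D r rho zeta Btot RStot Ftot (Tlim D r zeta Btot RStot).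
Proof.
move=> hF; split; last by move=> T B RS; apply: lower_bound.
set T := Tlim D r zeta Btot RStot.
set S1 := \sum_(u < U) D u / r u.
set S2 := \sum_(u < U) zeta u * D u.
set S3 := \sum_(u < U) rho u * D u.
have hS1 : 0 < S1 by apply: psum_gt0 => // u; rewrite divr_gt0.
have hS2 : 0 < S2.
  by apply: psum_gt0 => // u; have [? _] := hzeta u; rewrite mulr_gt0.
have hT1 : S1 / Btot <= T by rewrite /T /Tlim le_max lexx.
have hT2 : S2 / RStot <= T by rewrite /T /Tlim le_max lexx orbT.
have hT : 0 < T by apply: lt_le_trans hT1; rewrite divr_gt0.
have hTn : T != 0 by rewrite gt_eqF.
have hFlim : Flim D r rho zeta Btot RStot = S3 / T.
  rewrite /Flim -/S1 -/S2 -/S3 /T /Tlim -/S1 -/S2.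
  rewrite -(invf_div S1 Btot) -(invf_div S2 RStot).
  have ha : 0 < S1 / Btot by rewrite divr_gt0.
  have hb : 0 < S2 / RStot by rewrite divr_gt0.
  case: (lerP (S1 / Btot) (S2 / RStot)) => hab.
  - have : (S2 / RStot)^-1 <= (S1 / Btot)^-1 by rewrite lef_pV2 ?posrE.
    by move=> h; rewrite (min_r h) ?(max_r hab).
  - have : (S1 / Btot)^-1 <= (S2 / RStot)^-1 by rewrite lef_pV2 ?posrE ?ltW.
    by move=> h; rewrite (min_l h) ?(max_l (ltW hab)).
exists (fun u => D u / (r u * T)), (fun u => zeta u * D u / T).
have hBr : forall u, D u / (r u * T) * r u = D u / T.
  move=> u; have := hr u; rewrite lt0r => /andP[hr0 _]; field; apply/andP; split => //.
split.
- split; [exact: ltW | move=> u | move=> u].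
  + by rewrite ltW // divr_gt0 // mulr_gt0.
  + by have [? _] := hzeta u; rewrite ltW // divr_gt0 // mulr_gt0.
- move=> u; split; first by rewrite divr_gt0 // mulr_gt0.
  rewrite hBr; have := hD u; rewrite lt0r => /andP[hd0 _].
  by rewrite le_eqVlt; apply/orP; left; apply/eqP; field; apply/andP.
- split.
  + idtac.
    have -> : \sum_(i < U) D i / (r i * T) = S1 / T.
      rewrite /S1 mulr_suml; apply: eq_bigr => u _.
      have := hr u; rewrite lt0r => /andP[hr0 _]; field; apply/andP; split => //.
    by rewrite ler_pdivrMr // mulrC -ler_pdivrMr.
  + have -> : \sum_(i < U) zeta i * D i / T = S2 / T by rewrite /S2 mulr_suml.
    by rewrite ler_pdivrMr // mulrC -ler_pdivrMr.
- apply: le_trans hF.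
  rewrite le_eqVlt; apply/orP; left; apply/eqP.
  rewrite hFlim /S3 mulr_suml; apply: eq_bigr => u _.
  rewrite hBr; have [hz0 hz1] := hzeta u.
  have h1z : 1 - zeta u != 0 by rewrite subr_eq0 gt_eqF.
  by field; apply/andP.
- move=> u; rewrite hBr; have [hz0 hz1] := hzeta u; split.
  + rewrite ler_pM2r ?invr_gt0 //; rewrite -[leRHS]mul1r ler_pM2r //; exact: ltW.
  + rewrite le_eqVlt; apply/orP; left; apply/eqP.
    have hz : zeta u != 0 by rewrite gt_eqF.
    by field; apply/andP.
Qed.

Theorem mainTheorem7 (R : realFieldType) (U : nat) (hU : (0 < U)%N)
  (D r rho zeta : 'I_U -> R) (Btot RStot : R)
  (hD : forall u, 0 < D u) (hr : forall u, 0 < r u) (hrho : forall u, 0 < rho u)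
  (hzeta : forall u, 0 < zeta u /\ zeta u < 1)
  (hB : 0 < Btot) (hRS : 0 < RStot) :
  (* the optimal value of (P4) is at least T^lim for every F_total >= 0 *)
  (forall Ftot, 0 <= Ftot -> forall T B RS,
     feasibleP4 D r rho zeta Btot RStot Ftot T B RS ->
     Tlim D r zeta Btot RStot <= T) /\
  (* thresholds below T^lim are unreachable *)
  (forall Tth, Tth < Tlim D r zeta Btot RStot ->
     ~ exists Ftot T B RS, 0 <= Ftot /\
         feasibleP4 D r rho zeta Btot RStot Ftot T B RS /\ T <= Tth) /\
  (* thresholds at or above T^lim are reached with F^lim, and T^lim is the
     optimal value for every F_total >= F^lim *)
  (forall Tth, Tlim D r zeta Btot RStot <= Tth ->
     optimal_valueP4 D r rho zeta Btot RStot (Flim D r rho zeta Btot RStot)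
       (Tlim D r zeta Btot RStot) /\
     Tlim D r zeta Btot RStot <= Tth /\
     forall Ftot, Flim D r rho zeta Btot RStot <= Ftot ->
       optimal_valueP4 D r rho zeta Btot RStot Ftot (Tlim D r zeta Btot RStot)).
Proof.
split; first by move=> Ftot _ T B RS; apply: lower_bound.
split.
  move=> Tth hlt [Ftot [T [B [RS [_ [hf hle]]]]]].
  have := @lower_bound _ _ D r rho zeta Btot RStot Ftot hD hr hzeta hB hRS T B RS hf.
  move=> h; have := le_lt_trans (le_trans h hle) hlt; by rewrite ltxx.
move=> Tth hle; split; first by apply: attain.
split => // Ftot hF; exact: attain.
Qed.
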